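(* For every time $t$, let $C_t=\mathcal{K}-b_t$ and let $g_t(\theta)=(\mathbb{1}\{y_t\le b_t^{\alpha}+\theta^{\alpha}\}-\alpha)_{\alpha\in\mathcal{A}}$ be the gradient of the MultiQT loss $\ell_t(\theta)=\sum_{\alpha\in\mathcal{A}}\rho_\alpha(b_t^{\alpha}+\theta^{\alpha},y_t)$. Then $-g_t(\theta)\in T_{C_t}(\theta)$ for all $\theta$ on the boundary of $C_t$; i.e., $(\ell_t,C_t)$ satisfies inward flow.
   Context: $\mathcal{A}=\{\alpha_1<\dots<\alpha_m\}\subset(0,1)$; $\mathcal{K}=\{x\in\mathbb{R}^m:x_1\le\dots\le x_m\}$; base forecasts $b_t\in\mathcal{K}$, outcomes $y_t\in\mathbb{R}$; $C-v=\{x-v:x\in C\}$. Quantile loss $\rho_\alpha(\hat y,y)=\alpha|y-\hat y|$ if $y\ge\hat y$ and $(1-\alpha)|y-\hat y|$ otherwise. Tangent cone $T_C(x)=\mathrm{cl}\{y:\exists\beta>0,\ x+\varepsilon y\in C\ \forall\varepsilon\in[0,\beta]\}$. *)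

(* Defs.v *)
From HB Require Import structures.
From mathcomp Require Import all_boot all_order all_algebra.
From mathcomp Require Import all_classical all_reals all_analysis.
Set Implicit Arguments. Unset Strict Implicit. Unset Printing Implicit Defensive.
Import Order.TTheory GRing.Theory Num.Theory.
Import numFieldNormedType.Exports.
Local Open Scope classical_set_scope.
Local Open Scope ring_scope.

Section Defs.
Variables (R : realType) (m : nat).

Definition Kcone : set 'rV[R]_m :=
  [set x | forall i j : 'I_m, (i <= j)%N -> x 0 i <= x 0 j].

Definition setshift (C : set 'rV[R]_m) (v : 'rV[R]_m) : set 'rV[R]_m :=
  [set x - v | x in C].

Definition tangent_cone (C : set 'rV[R]_m) (x : 'rV[R]_m) : set 'rV[R]_m :=
  closure [set y | exists2 beta : R, 0 < beta &
                     forall eps : R, 0 <= eps <= beta -> C (x + eps *: y)].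

Definition boundary (C : set 'rV[R]_m) : set 'rV[R]_m :=
  closure C `\` interior C.

Definition qloss (a yhat y : R) : R :=
  if yhat <= y then a * `|y - yhat| else (1 - a) * `|y - yhat|.

Definition multiqt_loss (alpha : 'I_m -> R) (b : 'rV[R]_m) (y : R)
  (theta : 'rV[R]_m) : R :=
  \sum_(i < m) qloss (alpha i) (b 0 i + theta 0 i) y.

Definition multiqt_grad (alpha : 'I_m -> R) (b : 'rV[R]_m) (y : R)
  (theta : 'rV[R]_m) : 'rV[R]_m :=
  \row_i (((y <= b 0 i + theta 0 i)%R : bool)%:R - alpha i).

End Defs.

(* Main.v *)
Require Import Defs.
From HB Require Import structures.
From mathcomp Require Import all_boot all_order all_algebra.
From mathcomp Require Import all_classical all_reals all_analysis.
From mathcomp Require Import lra.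
Import Order.TTheory GRing.Theory Num.Theory.
Import numFieldNormedType.Exports.
Local Open Scope classical_set_scope.
Local Open Scope ring_scope.

Lemma closure_shift (R : realType) (m : nat) (b theta : 'rV[R]_m) :
  closure (setshift (@Kcone R m) b) theta -> Kcone (theta + b).
Proof.
pose D := [set p : 'I_m * 'I_m | (p.1 <= p.2)%N].
pose f := fun p : 'I_m * 'I_m =>
  (fun x : 'rV[R]_m => x 0 p.2 - x 0 p.1 + (b 0 p.2 - b 0 p.1)) @^-1` [set r : R | 0 <= r].
have cl : closed (\bigcap_(p in D) f p).
  apply: closed_bigI => p _; apply: preimage_closed; last exact: closed_ge.
  move=> x _; apply: (@cvgD _ _ _ (nbhs x)); last exact: cvg_cst.
  by apply: (@cvgB _ _ _ (nbhs x)); apply: coord_continuous.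
have sub : setshift (@Kcone R m) b `<=` \bigcap_(p in D) f p.
  move=> _ [x Kx <-] p Dp; rewrite /f /= !mxE.
  have := Kx _ _ Dp; lra.
move=> /(closureS sub) /cl H i j ij.
have := H (i, j) ij; rewrite /f /= !mxE; lra.
Qed.

Theorem lemma2 (R : realType) (m : nat) (alpha : 'I_m -> R)
    (alpha_incr : forall i j : 'I_m, (i < j)%N -> alpha i < alpha j)
    (alpha_range : forall i : 'I_m, 0 < alpha i < 1)
    (b : 'rV[R]_m) (hb : Kcone b) (y : R) (theta : 'rV[R]_m) :
  boundary (setshift (@Kcone R m) b) theta ->
  tangent_cone (setshift (@Kcone R m) b) theta (- multiqt_grad alpha b y theta).
Proof.
move=> [/closure_shift Kx _].
apply: subset_closure.
pose h := fun i : 'I_m => if b 0 i + theta 0 i < y then y - (b 0 i + theta 0 i) else 1.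
pose beta := \big[Order.min/1]_(i < m) h i.
have hpos : 0 < beta.
  apply: lt_bigmin => // i _; rewrite /h; case: ifPn => // H; lra.
exists beta => // eps /andP[e0 eb].
exists (theta + eps *: - multiqt_grad alpha b y theta + b); last by rewrite addrK.
move=> i j; rewrite leq_eqVlt => /orP[/eqP/val_inj -> //|ij].
have := Kx i j (ltnW ij); have ai := alpha_incr i j ij.
have hbi : beta <= h i by exact: bigmin_le.
rewrite /h in hbi.
have := alpha_range i; have := alpha_range j.
rewrite !mxE => /andP[aj0 aj1] /andP[ai0 ai1] xij.
have hm : 0 <= eps * (alpha j - alpha i) by apply: mulr_ge0 => //; lra.
have [hi|hi] := leP y (b 0 i + theta 0 i);
have [hj|hj] := leP y (b 0 j + theta 0 j); rewrite /= ?mulr1n ?mulr0n in hbi *.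
- lra.
- lra.
- rewrite hi in hbi; lra.
- lra.
Qed.
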